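(* Let $(X,d^\star)$ be a $\star$-metric space. Then the topological space $(X,\mathscr{T}_{d^\star})$ is metrizable, i.e. there exists a metric on $X$ inducing the topology $\mathscr{T}_{d^\star}$.
   Context: A $t$-definer is a function $\star:[0,\infty)\times[0,\infty)\to[0,\infty)$ such that for all $a,b,c\ge 0$: $a\star b=b\star a$; $a\star(b\star c)=(a\star b)\star c$; if $a\le b$ then $a\star c\le b\star c$; $a\star 0=a$; and $\star$ is continuous in its first variable with respect to the Euclidean topology. Given a nonempty set $X$ and a $t$-definer $\star$, a $\star$-metric on $X$ is a function $d^\star:X\times X\to[0,\infty)$ such that for all $x,y,z\in X$: $d^\star(x,y)=0$ iff $x=y$; $d^\star(x,y)=d^\star(y,x)$; and $d^\star(x,y)\le d^\star(x,z)\star d^\star(z,y)$. The pair $(X,d^\star)$ is a $\star$-metric space. For $a\in X$, $r>0$, put $B_{d^\star}(a,r)=\{x\in X: d^\star(a,x)<r\}$, and let $\mathscr{T}_{d^\star}$ be the family of all $U\subseteq X$ such that for each $a\in U$ there is $r>0$ with $B_{d^\star}(a,r)\subseteq U$ (this is a topology on $X$). *)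

(* Defs.v *)
From Stdlib Require Import Reals.
Open Scope R_scope.

(* A t-definer: a binary operation on [0,oo), represented as R -> R -> R
   together with closure of [0,oo); all axioms are required on [0,oo). *)
Definition is_tdefiner (star : R -> R -> R) : Prop :=
  (forall a b, 0 <= a -> 0 <= b -> 0 <= star a b) /\
  (forall a b, 0 <= a -> 0 <= b -> star a b = star b a) /\
  (forall a b c, 0 <= a -> 0 <= b -> 0 <= c ->
     star a (star b c) = star (star a b) c) /\
  (forall a b c, 0 <= a -> 0 <= b -> 0 <= c -> a <= b -> star a c <= star b c) /\
  (forall a, 0 <= a -> star a 0 = a) /\
  (forall b a, 0 <= b -> 0 <= a ->
     forall eps, 0 < eps -> exists delta, 0 < delta /\
       forall x, 0 <= x -> Rabs (x - a) < delta ->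
         Rabs (star x b - star a b) < eps).

Definition is_star_metric {X : Type} (star : R -> R -> R) (d : X -> X -> R) : Prop :=
  (forall x y, 0 <= d x y) /\
  (forall x y, d x y = 0 <-> x = y) /\
  (forall x y, d x y = d y x) /\
  (forall x y z, d x y <= star (d x z) (d z y)).

Definition is_metric {X : Type} (m : X -> X -> R) : Prop :=
  (forall x y, 0 <= m x y) /\
  (forall x y, m x y = 0 <-> x = y) /\
  (forall x y, m x y = m y x) /\
  (forall x y z, m x y <= m x z + m z y).

Definition ball {X : Type} (d : X -> X -> R) (a : X) (r : R) : X -> Prop :=
  fun x => d a x < r.

Definition ball_open {X : Type} (d : X -> X -> R) (U : X -> Prop) : Prop :=
  forall a, U a -> exists r, 0 < r /\ forall x, ball d a r x -> U x.

(* Main.v *)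
Require Import Defs.
From Stdlib Require Import Reals.
From Stdlib Require Import Lra.
Open Scope R_scope.

Definition gtr {X : Type} (d : X -> X -> R) x y := Rmin (d x y) 1.

Definition Eset {X : Type} (d : X -> X -> R) (x y : X) : R -> Prop :=
  fun r => exists z, r = Rabs (gtr d x z - gtr d y z).

Lemma gtr_bnd {X : Type} (d : X -> X -> R) x y :
  (forall x y, 0 <= d x y) -> 0 <= gtr d x y <= 1.
Proof. intros H; unfold gtr; specialize (H x y).
  unfold Rmin; destruct (Rle_dec (d x y) 1); lra. Qed.

Definition Eset' {X : Type} (d : X -> X -> R) (x y : X) : R -> Prop :=
  fun r => exists z, r = Rmin (Rabs (gtr d x z - gtr d y z)) 2.

Lemma Eset'_bound {X : Type} (d : X -> X -> R) x y : bound (Eset' d x y).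
Proof.
  exists 2. intros r [z ->]. apply Rmin_r.
Qed.

Lemma Eset'_ne {X : Type} (d : X -> X -> R) x y : exists r, Eset' d x y r.
Proof. exists (Rmin (Rabs (gtr d x x - gtr d y x)) 2). exists x; reflexivity. Qed.

Definition mm {X : Type} (d : X -> X -> R) x y : R :=
  proj1_sig (completeness (Eset' d x y) (Eset'_bound d x y) (Eset'_ne d x y)).

Lemma mm_lub {X : Type} (d : X -> X -> R) x y : is_lub (Eset' d x y) (mm d x y).
Proof. unfold mm; destruct completeness; auto. Qed.

Lemma mm_ge {X : Type} (d : X -> X -> R) x y z :
  (forall x y, 0 <= d x y) ->
  Rabs (gtr d x z - gtr d y z) <= mm d x y.
Proof.
  intros H. destruct (mm_lub d x y) as [H1 _].
  pose proof (H1 _ (ex_intro _ z eq_refl)) as H2.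
  pose proof (gtr_bnd d x z H); pose proof (gtr_bnd d y z H).
  assert (Rabs (gtr d x z - gtr d y z) <= 1) by (apply Rabs_le; lra).
  rewrite Rmin_left in H2 by lra. exact H2.
Qed.

Lemma mm_le {X : Type} (d : X -> X -> R) x y b :
  (forall x y, 0 <= d x y) ->
  (forall z, Rabs (gtr d x z - gtr d y z) <= b) -> mm d x y <= b.
Proof.
  intros H Hb. destruct (mm_lub d x y) as [_ H1]. apply H1.
  intros r [z ->]. eapply Rle_trans; [apply Rmin_l|apply Hb].
Qed.

Lemma unif (star : R -> R -> R) : is_tdefiner star ->
  forall eta, 0 < eta -> forall n : nat, exists delta, 0 < delta /\
   forall t s, 0 <= t -> t < delta -> 0 <= s -> s <= INR n * eta ->
     star t s <= s + 2 * eta.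
Proof.
  intros [Hpos [Hcom [Has [Hmon [H0 Hcont]]]]] eta Heta n.
  induction n as [|n IH].
  - exists eta; split; auto. intros t s Ht Htd Hs Hsn. simpl in Hsn.
    assert (s = 0) by lra. subst. rewrite H0 by lra. lra.
  - destruct IH as [d1 [Hd1 IH]].
    assert (Hb : 0 <= INR (S n) * eta) by (apply Rmult_le_pos; [apply pos_INR|lra]).
    destruct (Hcont (INR (S n) * eta) 0 Hb (Rle_refl 0) eta Heta) as [d2 [Hd2 Hc]].
    exists (Rmin d1 d2); split. { apply Rmin_pos; auto. }
    intros t s Ht Htd Hs Hsn.
    destruct (Rle_dec s (INR n * eta)) as [Hle|Hgt].
    + apply IH; auto. eapply Rlt_le_trans; [exact Htd| apply Rmin_l].
    + rewrite S_INR in Hsn, Hb, Hc. 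
      assert (Hm : star t s <= star t ((INR n + 1) * eta)).
      { rewrite (Hcom t s), (Hcom t) by lra. apply Hmon; lra. }
      assert (Ht2 : t < d2) by (eapply Rlt_le_trans; [exact Htd| apply Rmin_r]).
      specialize (Hc t Ht ltac:(rewrite Rminus_0_r, Rabs_right by lra; lra)).
      rewrite (Hcom 0), H0 in Hc by lra.
      apply Rabs_def2 in Hc. lra.
Qed.

Lemma unif1 (star : R -> R -> R) : is_tdefiner star ->
  forall eta, 0 < eta -> exists delta, 0 < delta /\
   forall t s, 0 <= t -> t < delta -> 0 <= s -> s <= 1 ->
     star t s <= s + eta.
Proof.
  intros Ht eta Heta.
  destruct (INR_archimed (eta/2) 1 ltac:(lra)) as [n Hn].
  destruct (unif star Ht (eta/2) ltac:(lra) n) as [dl [Hdl H]].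
  exists dl; split; auto. intros t s ? ? ? ?. 
  specialize (H t s); lra.
Qed.

Lemma min_est (star : R -> R -> R) u v t eta :
  0 <= eta -> (0 <= t -> forall s, 0 <= s -> s <= 1 -> star t s <= s + eta) ->
  0 <= t -> 0 <= v -> u <= star t v -> Rmin u 1 <= Rmin v 1 + eta.
Proof.
  intros He H Ht Hv Hu. unfold Rmin.
  destruct (Rle_dec u 1); destruct (Rle_dec v 1).
  - specialize (H Ht v Hv r0); lra.
  - lra.
  - specialize (H Ht v Hv r); lra.
  - lra.
Qed.

Theorem theorem2p4 (X : Type) (star : R -> R -> R) (d : X -> X -> R) :
  inhabited X -> is_tdefiner star -> is_star_metric star d ->
  exists m : X -> X -> R, is_metric m /\
    (forall U : X -> Prop, ball_open d U <-> ball_open m U).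
Proof.
  intros _ Hst Hd.
  destruct Hd as [Dpos [D0 [Dsym Dtri]]].
  assert (Dxx : forall x, d x x = 0) by (intros; apply D0; auto).
  assert (Gxy : forall x y, gtr d x y <= mm d x y).
  { intros x y. eapply Rle_trans; [|apply (mm_ge d x y y Dpos)].
    unfold gtr. rewrite Dxx, (Rmin_left 0 1) by lra.
    rewrite Rminus_0_r. apply Rle_abs. }
  exists (mm d). split.
  - split; [|split; [|split]].
    + intros x y. eapply Rle_trans; [apply Rabs_pos|apply (mm_ge d x y x Dpos)].
    + intros x y; split.
      * intros H. apply D0. specialize (Gxy x y). rewrite H in Gxy.
        pose proof (gtr_bnd d x y Dpos). unfold gtr in *.
        assert (Rmin (d x y) 1 = 0) by lra.
        unfold Rmin in H1; destruct (Rle_dec (d x y) 1); lra.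
      * intros ->. apply Rle_antisym.
        -- apply mm_le; auto. intros z. rewrite Rminus_diag, Rabs_R0; lra.
        -- eapply Rle_trans; [apply Rabs_pos|apply (mm_ge d y y y Dpos)].
    + intros x y. apply Rle_antisym; apply mm_le; auto; intros z;
        rewrite Rabs_minus_sym; apply mm_ge; auto.
    + intros x y z. apply mm_le; auto. intros w.
      replace (gtr d x w - gtr d y w) with
        ((gtr d x w - gtr d z w) + (gtr d z w - gtr d y w)) by ring.
      eapply Rle_trans; [apply Rabs_triang|].
      apply Rplus_le_compat; apply mm_ge; auto.
  - intros U; split.
    + intros HU a Ha. destruct (HU a Ha) as [r [Hr Hb]].
      exists (Rmin r 1); split; [apply Rmin_pos; lra|].
      intros x Hx. apply Hb. unfold ball in *.
      specialize (Gxy a x). unfold gtr, Rmin in *.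
      destruct (Rle_dec r 1); destruct (Rle_dec (d a x) 1); lra.
    + intros HU a Ha. destruct (HU a Ha) as [r [Hr Hb]].
      destruct (unif1 star Hst (r/2) ltac:(lra)) as [del [Hdel Hu]].
      exists del; split; auto. intros x Hx. apply Hb. unfold ball in *.
      assert (mm d a x <= r/2); [|lra].
      apply mm_le; auto. intros z. apply Rabs_le. unfold gtr.
      assert (Hu' : 0 <= d a x -> forall s, 0 <= s -> s <= 1 -> star (d a x) s <= s + r/2)
        by (intros; apply Hu; auto).
      split.
      * assert (Rmin (d x z) 1 <= Rmin (d a z) 1 + r/2); [|lra].
        apply (min_est star _ _ (d a x)); auto; try lra.
        rewrite (Dsym a x). apply Dtri.
      * assert (Rmin (d a z) 1 <= Rmin (d x z) 1 + r/2); [|lra].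
        apply (min_est star _ _ (d a x)); auto; try lra.
Qed.
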